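(* If $n\ge3$, then $a_n(y;-1,1)=0$ and $a_n(y;1,-1)=2^{n-2}y^{n-1}(y-1)$.
   Context: An inversion sequence of length $n$ is a sequence $\rho=\rho_1\cdots\rho_n$ of integers with $1\le \rho_i\le i$ for all $i$; $I_{n,i}$ is the set of those of length $n$ with last letter $i$. Let $\mathrm{area}(\rho)=\rho_1+\cdots+\rho_n$ and $\mathrm{sper}(\rho)=n+\rho_1+\sum_{i=1}^{n-1}\max(\rho_{i+1}-\rho_i,0)$ (the area and semi-perimeter of the bargraph whose $i$-th column has $\rho_i$ cells). Define $a_n(y;p,q)=\sum_{i=1}^n y^i\sum_{\rho\in I_{n,i}}p^{\mathrm{area}(\rho)}q^{\mathrm{sper}(\rho)}$. *)

(* Defs.v *)
From mathcomp Require Import all_boot all_order all_algebra.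
Set Implicit Arguments. Unset Strict Implicit. Unset Printing Implicit Defensive.
Import GRing.Theory.
Local Open Scope ring_scope.

Definition word_seq (n : nat) (w : n.-tuple 'I_n.+1) : seq nat :=
  [seq nat_of_ord x | x <- w].

(* rho is an inversion sequence: 1 <= rho_i <= i for all i = 1..n
   (0-based position j holds rho_{j+1}). *)
Definition is_invseq (n : nat) (w : n.-tuple 'I_n.+1) : bool :=
  [forall j : 'I_n, (0 < tnth w j)%N && (tnth w j <= j.+1)%N].

Definition area (s : seq nat) : nat := sumn s.

(* sper(rho) = n + rho_1 + sum_{i=1}^{n-1} max(rho_{i+1} - rho_i, 0);
   truncated nat subtraction is exactly max(_, 0). *)
Definition sper (s : seq nat) : nat :=
  (size s + head 0%N s +
   \sum_(i < (size s).-1) (nth 0%N s i.+1 - nth 0%N s i))%N.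

Definition lastletter (s : seq nat) : nat := last 0%N s.

Definition a_poly (R : comRingType) (n : nat) (p q : R) : {poly R} :=
  \sum_(w : n.-tuple 'I_n.+1 | is_invseq w)
     (p ^+ area (word_seq w) * q ^+ sper (word_seq w)) *: 'X^(lastletter (word_seq w)).

(* Main.v *)
Require Import Defs.
From mathcomp Require Import all_boot all_order all_algebra.
From mathcomp Require Import zify.
Import GRing.Theory.
Local Open Scope ring_scope.

Fixpoint inv_seqs (n : nat) : seq (seq nat) :=
  if n is n'.+1 then [seq rcons s j | s <- inv_seqs n', j <- iota 1 n] else [:: [::]].

Definition InvP n (s : seq nat) := size s = n /\
  forall i, (i < n)%N -> (0 < nth 0%N s i)%N && (nth 0%N s i <= i.+1)%N.

Lemma inv_seqsS n : inv_seqs n.+1 = [seq rcons s j | s <- inv_seqs n, j <- iota 1 n.+1].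
Proof. by []. Qed.

Lemma mem_inv n s : s \in inv_seqs n <-> InvP n s.
Proof.
elim: n s => [|n IH] s.
  rewrite /= inE; split; first by move/eqP->.
  by case=> /size0nil ->.
rewrite inv_seqsS; split.
  move/allpairsP=> [[s' j] [/IH [Hs Hi] Hj ->]].
  rewrite mem_iota in Hj; simpl in Hs, Hi, Hj |- *.
  split; first by rewrite size_rcons Hs.
  move=> i Hin; rewrite nth_rcons Hs.
  case: (ltnP i n) => Hi1; first exact: Hi.
  have -> : i = n by lia.
  by rewrite eqxx; lia.
case=> Hs Hi.
case/lastP: s Hs Hi => [//|s' j] Hs Hi.
rewrite size_rcons in Hs; case: Hs => Hs.
apply/seq.allpairsP; exists (s', j); split => //=.
  apply/IH; split => // i Hin.
  by move: (Hi i (leqW Hin)); rewrite nth_rcons Hs Hin.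
change (j \in iota 1 n.+1); rewrite mem_iota.
by move: (Hi n (ltnSn n)); rewrite nth_rcons Hs ltnn eqxx; lia.
Qed.

Lemma uniq_inv n : uniq (inv_seqs n).
Proof.
elim: n => [//|n IH]; rewrite inv_seqsS.
apply: allpairs_uniq => //; first exact: iota_uniq.
by move=> [a b] [c d] _ _ /= /rcons_inj [-> ->].
Qed.

Lemma sum_tuple_seq (R : nmodType) n (F : seq nat -> R) :
  \sum_(w : n.-tuple 'I_n.+1 | is_invseq w) F (word_seq w) = \sum_(s <- inv_seqs n) F s.
Proof.
rewrite -big_filter -(big_map (@word_seq n) xpredT).
apply: perm_big; apply: uniq_perm.
- rewrite map_inj_uniq ?filter_uniq ?index_enum_uniq //.
  move=> w1 w2; rewrite /word_seq => /(inj_map val_inj) H.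
  by apply: val_inj.
- exact: uniq_inv.
move=> s; apply/idP/idP.
  case/mapP=> w; rewrite mem_filter => /andP[/forallP Hw _] ->.
  apply/mem_inv; split; first by rewrite size_map size_tuple.
  move=> i Hi; rewrite (nth_map ord0) ?size_tuple //.
  by move: (Hw (Ordinal Hi)); rewrite (tnth_nth ord0).
move/mem_inv=> [Hs Hi].
apply/mapP; exists [tuple (inord (nth 0%N s i) : 'I_n.+1) | i < n].
  rewrite mem_filter mem_index_enum andbT.
  apply/forallP=> j; rewrite tnth_mktuple inordK; first exact: Hi.
  by move: (Hi j (ltn_ord j)) (ltn_ord j); lia.
apply: (@eq_from_nth _ 0%N); first by rewrite size_map size_tuple.
move=> i; rewrite Hs => Hin.
rewrite /word_seq (nth_map ord0) ?size_tuple //.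
set t := (X in nth ord0 (val X) i).
have -> : nth ord0 t i = tnth t (Ordinal Hin) by rewrite (tnth_nth ord0).
rewrite tnth_mktuple /= inordK //.
by move: (Hi i Hin); lia.
Qed.

Lemma inv_step (V : nmodType) n (F : seq nat -> V) :
  \sum_(s <- inv_seqs n.+1) F s = \sum_(s <- inv_seqs n) \sum_(j <- iota 1 n.+1) F (rcons s j).
Proof. by rewrite inv_seqsS big_allpairs_dep. Qed.

Lemma area_rcons s j : area (rcons s j) = (area s + j)%N.
Proof. by rewrite /area sumn_rcons. Qed.

Lemma sper_rcons s j : s != [::] -> sper (rcons s j) = (sper s + 1 + (j - last 0%N s))%N.
Proof.
case: s => [//|a t] _.
rewrite /sper size_rcons.
have -> : size (a :: t) = (size t).+1 by [].
have -> : head 0%N (rcons (a :: t) j) = a by [].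
have -> : head 0%N (a :: t) = a by [].
rewrite succnK big_ord_recr /=.
have -> : \sum_(i < size t) (nth 0 (rcons (a :: t) j) (widen_ord (leqnSn (size t)) i).+1 -
      nth 0 (rcons (a :: t) j) (widen_ord (leqnSn (size t)) i))%N =
      \sum_(i < size t) (nth 0 (a :: t) i.+1 - nth 0 (a :: t) i)%N.
  apply: eq_bigr => i _ /=.
  rewrite -rcons_cons !nth_rcons /=.
  have Hi := ltn_ord i.
  by rewrite Hi ltnS (ltnW Hi).
rewrite -rcons_cons !nth_rcons /= ltnn eqxx ltnSn.
have -> : nth 0%N (a :: t) (size t) = last 0%N (a :: t) by rewrite -nth_last.
rewrite /=.
set S := (\sum_(i < size t) _)%R. clearbody S. move: S; rewrite /GRing.BaseAddUMagma.sort /=; move=> S. lia.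
Qed.

Lemma Estep (R : comNzRingType) n :
  \sum_(s <- inv_seqs n.+1) (-1 : R) ^+ area s =
  (\sum_(s <- inv_seqs n) (-1) ^+ area s) * \sum_(j <- iota 1 n.+1) (-1) ^+ j.
Proof.
rewrite inv_step mulr_suml; apply: eq_bigr => s _.
rewrite mulr_sumr; apply: eq_bigr => j _.
by rewrite area_rcons exprD.
Qed.

Lemma Ezero (R : comNzRingType) n : \sum_(s <- inv_seqs n.+2) (-1 : R) ^+ area s = 0.
Proof.
elim: n => [|n IH]; last by rewrite Estep IH mul0r.
rewrite Estep /= !big_cons big_nil.
by rewrite big_nil expr1 expr2 mulN1r opprK !addr0 addNr mulr0.
Qed.

Lemma sper11 : sper [:: 1%N; 1%N] = 3%N.
Proof. by rewrite /sper /= big_ord_recr big_ord0. Qed.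
Lemma sper12 : sper [:: 1%N; 2%N] = 4%N.
Proof. by rewrite /sper /= big_ord_recr big_ord0. Qed.

Lemma P2 (R : comNzRingType) (V : lmodType R) n (g : nat -> V) :
  \sum_(s <- inv_seqs n.+2) (-1 : R) ^+ sper s *: g (last 0%N s) =
  (2 ^ n)%:R *: (g n.+2 - g n.+1).
Proof.
elim: n g => [|n IH] g.
  rewrite inv_step.
  have -> : inv_seqs 1 = [:: [:: 1%N]] by [].
  rewrite big_seq1 /= !big_cons big_nil /= sper11 sper12.
  have e3 : (-1 : R) ^+ 3 = -1 by rewrite -signr_odd expr1.
  have e4 : (-1 : R) ^+ 4 = 1 by rewrite -signr_odd expr0.
  by rewrite e3 e4 expn0 mulr1n !scale1r scaleN1r addr0 addrC.
pose h i := \sum_(j <- iota 1 n.+3) (-1 : R) ^+ (1 + (j - i)) *: g j.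
transitivity (\sum_(s <- inv_seqs n.+2) (-1 : R) ^+ sper s *: h (last 0%N s)).
  rewrite inv_step big_seq [RHS]big_seq; apply: eq_bigr => s Hs.
  have Hne : s != [::].
    by move/mem_inv: Hs => [Hsz _]; apply/eqP => Hs0; rewrite Hs0 in Hsz.
  rewrite /h scaler_sumr; apply: eq_bigr => j _.
  by rewrite sper_rcons // last_rcons scalerA -exprD addnA.
rewrite IH.
have -> : h n.+2 - h n.+1 = 2%:R *: (g n.+3 - g n.+2).
  rewrite /h -sumrB.
  have -> : iota 1 n.+3 = iota 1 n.+1 ++ [:: n.+2; n.+3].
    by rewrite {1}(_ : n.+3 = n.+1 + 2)%N ?iotaD ?add1n // addn2.
  rewrite big_cat big1_seq; last first.
    move=> j /andP[_]; rewrite mem_iota => /andP[_ Hj].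
    have -> : (j - n.+2)%N = 0%N by lia.
    have -> : (j - n.+1)%N = 0%N by lia.
    by rewrite subrr.
  rewrite !big_cons big_nil subnn subSnn.
  have -> : (n.+3 - n.+2)%N = 1%N by lia.
  have -> : (n.+3 - n.+1)%N = 2%N by lia.
  change (0 + (((-1:R) ^+ (1 + 0) *: g n.+2 - (-1) ^+ (1 + 1) *: g n.+2) +
     (((-1) ^+ (1 + 1) *: g n.+3 - (-1) ^+ (1 + 2) *: g n.+3) + 0)) = 2 *: (g n.+3 - g n.+2)).
  have e3 : (-1 : R) ^+ 3 = -1 by rewrite -signr_odd expr1.
  have e2 : (-1 : R) ^+ 2 = 1 by rewrite -signr_odd expr0.
  rewrite add0r addr0 addn0 addn1 (_ : 1 + 2 = 3)%N // e3 e2 expr1.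
  rewrite !scaleN1r !scale1r opprK scaler_nat mulr2n addrC addrACA.
  by [].
by rewrite scalerA -natrM expnS mulnC.
Qed.

Theorem proposition2p5 (n : nat) : (3 <= n)%N ->
  a_poly n (-1 : int) 1 = 0 /\
  a_poly n (1 : int) (-1) = (2 ^ (n - 2))%:R *: ('X^(n.-1) * ('X - 1)).
Proof.
case: n => [|[|[|n]]] // _.
split.
  rewrite /a_poly /lastletter (@sum_tuple_seq _ n.+3 (fun s => ((-1:int) ^+ area s * 1 ^+ sper s) *: 'X^(last 0%N s))).
  rewrite inv_step.
  transitivity (\sum_(s <- inv_seqs n.+2) ((-1 : int) ^+ area s) *:
                 \sum_(j <- iota 1 n.+3) (-1) ^+ j *: ('X^j : {poly int})).
    apply: eq_bigr => s _; rewrite scaler_sumr; apply: eq_bigr => j _.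
    by rewrite area_rcons exprD expr1n mulr1 last_rcons scalerA.
  by rewrite -scaler_suml Ezero scale0r.
rewrite /a_poly /lastletter (@sum_tuple_seq _ n.+3 (fun s => ((1:int) ^+ area s * (-1) ^+ sper s) *: 'X^(last 0%N s))).
under eq_bigr => s _ do rewrite expr1n mul1r.
rewrite (P2 _ _ n.+1 (fun j => ('X^j : {poly int}))).
have -> : (n.+3 - 2 = n.+1)%N by [].
by rewrite /= mulrBr mulr1 -exprSr.
Qed.
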